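(* Let $X$ be a finite alphabet, $\#$ a symbol not in $X$, $X^\# = X \cup \{\#\}$, and let $w \in \overline{X}^*$. Then the following are equivalent: (i) $w$ represents $1$ in the polycyclic monoid $P(X)$; (ii) $w$ admits a permissible padding which represents $1$ in the polycyclic monoid $P(X^\#)$; (iii) $w$ admits a permissible padding which represents $1$ in the free group $F(X^\#)$.
   Context: For an alphabet $Y$, $\overline{Y} = \{y, y^{-1} : y \in Y\}$; letters of $Y$ are positive generators and letters $y^{-1}$ negative generators. The polycyclic monoid $P(Y)$ is the monoid of partial functions on $Y^*$ (composed left to right: $fg$ means apply $f$ then $g$) generated by $y: z \mapsto zy$ (defined everywhere) and $y^{-1}: zy \mapsto z$ (defined on $Y^*y$), $y \in Y$. $F(Y)$ is the free group with presentation $\langle \overline{Y} \mid yy^{-1} = y^{-1}y = 1 \ (y \in Y)\rangle$. Permissible padding: for $w = w_1 \cdots w_n$ with $w_i \in \overline{X}$, a permissible padding of $w$ is a word $x_1 x_2 \cdots x_n (\#^{-1})^k$ over $\overline{X^\#}$ with $k \geq 0$, where $x_i = (\#^{-1})^{m_i} w_i \#$ for some $m_i \geq 0$ if $w_i$ is a negative generator, and $x_i = w_i \#$ if $w_i$ is a positive generator. *)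

(* Defs.v *)
From mathcomp Require Import all_boot.
Set Implicit Arguments. Unset Strict Implicit. Unset Printing Implicit Defensive.

(* A letter of \overline{Y} is a pair (y, b): b = true means the positive
   generator y, b = false means the negative generator y^{-1}. *)
Definition letter (Y : Type) := (Y * bool)%type.
Definition gword (Y : Type) := seq (letter Y).

Definition act_letter (Y : eqType) (a : letter Y) (z : seq Y) : option (seq Y) :=
  let: (y, b) := a in
  if b then Some (rcons z y)
  else match lastP z with
       | LastNil => None
       | LastRcons z' y' => if y' == y then Some z' else None
       end.

Fixpoint act_word (Y : eqType) (w : gword Y) (z : seq Y) : option (seq Y) :=
  match w with
  | [::] => Some z
  | a :: w' => match act_letter a z with
               | Some z' => act_word w' z'
               | None => None
               end
  end.

(* w represents 1 in P(Y): its partial function is the identity on all of Y^*. *)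
Definition rep1_polycyclic (Y : eqType) (w : gword Y) : Prop :=
  forall z : seq Y, act_word w z = Some z.

Definition inv_letter (Y : Type) (a : letter Y) : letter Y := (a.1, ~~ a.2).

Inductive fg_equiv (Y : Type) : gword Y -> gword Y -> Prop :=
  | fg_refl w : fg_equiv w w
  | fg_sym u v : fg_equiv u v -> fg_equiv v u
  | fg_trans u v t : fg_equiv u v -> fg_equiv v t -> fg_equiv u t
  | fg_cancel u v a : fg_equiv (u ++ a :: inv_letter a :: v) (u ++ v).

Definition rep1_freegroup (Y : Type) (w : gword Y) : Prop := fg_equiv w [::].

(* X^# = option X, with None playing the role of the new symbol #. *)
Definition hash_pos (X : Type) : letter (option X) := (None, true).
Definition hash_neg (X : Type) : letter (option X) := (None, false).

Definition pad_block (X : Type) (a : letter X) (m : nat) : gword (option X) :=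
  if a.2 then [:: (Some a.1, true); hash_pos X]
  else nseq m (hash_neg X) ++ [:: (Some a.1, false); hash_pos X].

Definition pad (X : Type) (w : gword X) (ms : seq nat) (k : nat) : gword (option X) :=
  flatten [seq pad_block p.1 p.2 | p <- zip w ms] ++ nseq k (hash_neg X).

Definition permissible_padding (X : Type) (w : gword X) (p : gword (option X)) : Prop :=
  exists (ms : seq nat) (k : nat), size ms = size w /\ p = pad w ms k.

(* Main.v *)
Require Import Defs.
From mathcomp Require Import all_boot.
From mathcomp Require Import all_algebra zify.
Import GRing.Theory Num.Theory.

Set Implicit Arguments. Unset Strict Implicit. Unset Printing Implicit Defensive.

Lemma act_neg_nil (Y : eqType) (y : Y) : act_letter (y, false) [::] = None.
Proof.
rewrite /act_letter.
have : forall s : seq Y, s = [::] -> (match lastP s with LastNil => None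
  | LastRcons z' y' => if y' == y then Some z' else None end) = None.
  move=> s; case: (lastP s) => // z y'; by case: z.
by apply.
Qed.

Lemma act_neg_rcons (Y : eqType) (y y' : Y) z :
  act_letter (y, false) (rcons z y') = if y' == y then Some z else None.
Proof.
rewrite /act_letter.
have : forall s : seq Y, s = rcons z y' -> (match lastP s with LastNil => None
  | LastRcons z' y' => if y' == y then Some z' else None end) = (if y' == y then Some z else None).
  move=> s; case: (lastP s).
    by case: z.
  by move=> z1 y1 /rcons_inj [-> ->].
by apply.
Qed.

Lemma act_letter_shift (Y : eqType) (a : letter Y) s t z :
  act_letter a s = Some t -> act_letter a (z ++ s) = Some (z ++ t).
Proof.
case: a => y [].
  by move=> /= [<-]; rewrite rcons_cat.
case/lastP: s => [|s y'].
  by rewrite act_neg_nil.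
rewrite -rcons_cat !act_neg_rcons.
by case: (y' == y) => // -[<-].
Qed.

Lemma act_word_shift (Y : eqType) (p : gword Y) s t z :
  act_word p s = Some t -> act_word p (z ++ s) = Some (z ++ t).
Proof.
elim: p s => [|a p IH] s /=; first by move=> [<-].
case E: (act_letter a s) => [s'|] // H.
by rewrite (act_letter_shift z E); apply: IH.
Qed.

Lemma act_word_cat (Y : eqType) (u v : gword Y) z :
  act_word (u ++ v) z = obind (act_word v) (act_word u z).
Proof.
elim: u z => [|a u IH] z //=.
by case: (act_letter a z).
Qed.

Lemma rep1_of_nil (Y : eqType) (p : gword Y) :
  act_word p [::] = Some [::] -> rep1_polycyclic p.
Proof. by move=> H z; have := act_word_shift z H; rewrite !cats0. Qed.

Lemma act_word_cons (Y : eqType) (a : letter Y) w z :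
  act_word (a :: w) z = match act_letter a z with Some z' => act_word w z' | None => None end.
Proof. by []. Qed.

Lemma pad_cons (X : Type) a (w : gword X) m ms k :
  pad (a :: w) (m :: ms) k = pad_block a m ++ pad w ms k.
Proof. by rewrite /pad /= catA. Qed.

Lemma nseq_rc (T : Type) m (x : T) : nseq m x ++ [:: x] = nseq m.+1 x.
Proof. by elim: m => //= m ->. Qed.

Lemma pmap_nseqN (X : Type) m : pmap id (nseq m (@None X)) = [::].
Proof. by elim: m. Qed.

Lemma obindS (A B : Type) (f : A -> option B) a : obind f (Some a) = f a.
Proof. by []. Qed.

Lemma pmap_decomp (X : eqType) (T : seq (option X)) :
  pmap id T != [::] -> exists T1 x m, T = rcons T1 (Some x) ++ nseq m None.
Proof.
elim/last_ind: T => [|T o IH] //.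
rewrite -cats1 pmap_cat; case: o => [x|] /= H.
  by exists T, x, 0; rewrite cats0 cats1.
rewrite cats0 in H; have [T1 [x [m ->]]] := IH H.
by exists T1, x, m.+1; rewrite -catA nseq_rc.
Qed.

Lemma act_hneg (X : eqType) m (T : seq (option X)) :
  act_word (nseq m (hash_neg X)) (T ++ nseq m None) = Some T.
Proof.
elim: m T => [|m IH] T; first by rewrite cats0.
change (act_word (hash_neg X :: nseq m (hash_neg X)) (T ++ nseq m.+1 None) = Some T).
rewrite -nseq_rc catA cats1 act_word_cons /hash_neg act_neg_rcons eqxx; exact: IH.
Qed.

Lemma pmap_nil_nseq (X : Type) (T : seq (option X)) :
  pmap id T = [::] -> T = nseq (size T) None.
Proof. by elim: T => [|[x|] T IH] //= /IH <-. Qed.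

Lemma constr (X : eqType) (w : gword X) : forall T t',
  act_word w (pmap id T) = Some t' -> exists ms, size ms = size w /\
  exists T', act_word (flatten [seq pad_block p.1 p.2 | p <- zip w ms]) T = Some T'
    /\ pmap id T' = t'.
Proof.
elim: w => [|[x b] w IH] T t'.
  by move=> /= [<-]; exists [::]; split => //; exists T.
rewrite act_word_cons.
case: b.
  move=> /= H.
  have : act_word w (pmap id (rcons (rcons T (Some x)) None)) = Some t'.
    by rewrite -!cats1 !pmap_cat /= cats0 cats1.
  move/IH => [ms [Hs [T' [HT' HP]]]].
  exists (0 :: ms); split; first by rewrite /= Hs.
  by exists T'; rewrite /= /pad_block /=.
case E: (pmap id T) => [|y s]; first by rewrite act_neg_nil.
have : pmap id T != [::] by rewrite E.
move/pmap_decomp => [T1 [x' [m HT]]].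
move: E; rewrite HT pmap_cat -cats1 pmap_cat pmap_nseqN cats0 [pmap id [:: _]]/= => E.
rewrite -E cats1 act_neg_rcons.
case: eqP => // -> H.
have : act_word w (pmap id (rcons T1 None)) = Some t'.
  by rewrite -cats1 pmap_cat /= cats0.
move/IH => [ms [Hs [T' [HT' HP]]]].
exists (m :: ms); split; first by rewrite /= Hs.
exists T'; split => //.
change (act_word ((nseq m (hash_neg X) ++ [:: (Some x,false); hash_pos X]) ++ flatten [seq pad_block p.1 p.2 | p <- zip w ms]) ((T1 ++ [:: Some x]) ++ nseq m None) = Some T').
rewrite !act_word_cat act_hneg obindS.
have -> : act_word [:: (Some x,false); hash_pos X] (T1 ++ [:: Some x]) = Some (rcons T1 None).
  by rewrite act_word_cons cats1 act_neg_rcons eqxx.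
by rewrite obindS.
Qed.

Lemma i_ii (X : eqType) (w : gword X) :
  rep1_polycyclic w -> exists p, permissible_padding w p /\ rep1_polycyclic p.
Proof.
move=> H; have := H [::].
rewrite -[[::]](_ : pmap id [::] = [::] :> seq X) //.
move/constr => [ms [Hs [T' [HT' HP]]]].
exists (pad w ms (size T')); split; first by exists ms, (size T').
apply: rep1_of_nil.
rewrite /pad act_word_cat HT' /=.
have HT'' := pmap_nil_nseq HP.
by rewrite HT'' size_nseq -[nseq _ None]cat0s act_hneg.
Qed.

Lemma pc_fg (Y : eqType) (p : gword Y) : forall s t,
  act_word p s = Some t ->
  fg_equiv (map (fun y => (y, true)) s ++ p) (map (fun y => (y, true)) t).
Proof.
elim: p => [|[y b] p IH] s t.
  by move=> /= [<-]; rewrite cats0; apply: fg_refl.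
rewrite act_word_cons.
case: b.
  rewrite /=.
  move/IH; by rewrite map_rcons cat_rcons.
case/lastP: s => [|s y']; first by rewrite act_neg_nil.
rewrite act_neg_rcons; case: eqP => // -> /IH H.
rewrite map_rcons cat_rcons.
apply: fg_trans H.
exact: (fg_cancel (map (fun y0 => (y0, true)) s) p (y, true)).
Qed.

Lemma ii_iii (X : eqType) (w : gword X) :
  (exists p, permissible_padding w p /\ rep1_polycyclic p) ->
  exists p, permissible_padding w p /\ rep1_freegroup p.
Proof.
move=> [p [Hp H]]; exists p; split => //.
by have := pc_fg (H [::]).
Qed.

Section Heights.
Variable X : finType.
Local Open Scope ring_scope.

Definition hl := (X * int * bool)%type.

Definition pushc (c : hl) (Q : seq hl) : seq hl :=
  match Q with
  | d :: Q' => if d == (c.1, ~~ c.2) then Q' else c :: Q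
  | [::] => [:: c]
  end.

Definition step (a : letter (option X)) (st : seq hl * int) : seq hl * int :=
  let: (Q, H) := st in
  match a with
  | (None, true) => (Q, H + 1)
  | (None, false) => (Q, H - 1)
  | (Some x, b) => (pushc (x, H, b) Q, H)
  end.

Definition eval (p : gword (option X)) st := foldl (fun st a => step a st) st p.

Fixpoint red (Q : seq hl) : bool :=
  match Q with
  | a :: ((b :: _) as Q') => (a != (b.1, ~~ b.2)) && red Q'
  | _ => true
  end.

Lemma inv_sym (a b : hl) : (a == (b.1, ~~ b.2)) = (b == (a.1, ~~ a.2)).
Proof.
case: a => a1 a2; case: b => b1 b2 /=.
by apply/eqP/eqP => -[-> ->]; rewrite negbK.
Qed.

Lemma red_tail a Q : red (a :: Q) -> red Q.
Proof. by case: Q => //= b Q /andP []. Qed.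

Lemma red_push c Q : red Q -> red (pushc c Q).
Proof.
case: Q => //= d Q HS.
case: ifP => [_|Hd]; first exact: red_tail HS.
by rewrite /= HS inv_sym Hd.
Qed.

Lemma push_inv c Q : red Q -> pushc (c.1, ~~ c.2) (pushc c Q) = Q.
Proof.
case: Q => [|d Q] /=.
  by case: c => c1 c2 /=; rewrite negbK eqxx.
case: ifP => Hd HS.
  move/eqP: Hd => Hd; subst d.
  case: Q HS => [|e Q] /=; first by [].
  move=> /andP [He _]; rewrite inv_sym /= negbK in He.
  by rewrite negbK (negbTE He).
by case: c Hd => c1 c2 /= _; rewrite negbK eqxx.
Qed.

Lemma red_step a st : red st.1 -> red (step a st).1.
Proof. by case: st => Q H; case: a => [[x|] [|]] //= ; apply: red_push. Qed.

Lemma red_eval p st : red st.1 -> red (eval p st).1.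
Proof. by elim: p st => [|a p IH] st //= H; apply: IH; apply: red_step. Qed.

Lemma step_inv a st : red st.1 -> step (inv_letter a) (step a st) = st.
Proof.
case: st => Q H /=; case: a => [[x|] [|]] /= HS.
- by rewrite (push_inv (x, H, true) HS).
- by rewrite (push_inv (x, H, false) HS).
- by rewrite addrK.
- by rewrite subrK.
Qed.

Lemma fg_eval u v : fg_equiv u v -> forall st, red st.1 -> eval u st = eval v st.
Proof.
elim => {u v}.
- by [].
- by move=> u v _ IH st H; rewrite IH.
- by move=> u v t _ IH1 _ IH2 st H; rewrite IH1 // IH2.
- move=> u v a st H.
  rewrite /eval !foldl_cat /=.
  by rewrite -/(eval u st) step_inv // red_eval.
Qed.

Fixpoint invS (Q : seq hl) : Prop :=
  match Q with
  | a :: Q' => (match Q' with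
                | b :: _ => (~~ b.2 -> a.2 -> b.1.2 < a.1.2)
                | [::] => True end) /\ invS Q'
  | [::] => True
  end.

Definition topok (Q : seq hl) (H : int) : Prop :=
  match Q with
  | a :: _ => ~~ a.2 -> a.1.2 < H
  | [::] => True
  end.

Definition negl (c : hl) : bool := ~~ c.2.
Definition proj (Q : seq hl) : seq X := map (fun c => c.1.1) Q.

Lemma eval_cat u v st : eval (u ++ v) st = eval v (eval u st).
Proof. by rewrite /eval foldl_cat. Qed.

Lemma eval_hneg m Q H : eval (nseq m (hash_neg X)) (Q, H) = (Q, H - (Posz m)).
Proof.
elim: m H => [|m IH] H /=; first by rewrite subr0.
rewrite /eval /= -/(eval _ _) IH; congr (_, _); lia.
Qed.

Lemma block (a : letter X) m Q H :
  invS Q -> topok Q H ->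
  let st' := eval (pad_block a m) (Q, H) in
  [/\ invS st'.1, topok st'.1 st'.2,
      (has negl Q -> has negl st'.1) &
      (~~ has negl st'.1 -> act_letter a (rev (proj Q)) = Some (rev (proj st'.1)))].
Proof.
case: a => x [] HS HT.
- rewrite /=. rewrite /pad_block /eval /= -/(eval _ _).
  have -> : pushc (x, H, true) Q = (x, H, true) :: Q.
    case: Q HS HT => [|d Q] //= HS HT.
    case: ifP => // /eqP Hd; subst d; move: HT => /= HT.
    have := HT isT; lia.
  split => //=.
  + split => //; case: Q HS HT => //= d Q _ HT Hd _; exact: HT.
  + by move=> _; rewrite rev_cons.
- rewrite [pad_block _ _]/pad_block [(_, _).2]/= eval_cat eval_hneg.
  rewrite (_ : eval [:: (Some (x,false).1,false); hash_pos X] (Q, H - Posz m) = (pushc (x, H - Posz m, false) Q, H - Posz m + 1)) //.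
  case: Q HS HT => [|d Q] HS HT.
  + rewrite [proj _]/= [rev _]/= act_neg_nil /=.
    split => //; move=> _; lia.
  + rewrite [proj _]/= rev_cons act_neg_rcons /=.
    case: ifP => [/eqP Hd|Hd].
    * subst d; move: HS HT => /= [HS1 HS2] HT.
      split => //=.
      -- case: Q HS1 HS2 => //= e Q HS1 _ He; have := HS1 He isT; lia.
      -- by rewrite eqxx.
    * split => //=.
      -- move=> _; lia.
Qed.

Lemma blocks (w : gword X) : forall ms Q H, size ms = size w -> invS Q -> topok Q H ->
  let st' := eval (flatten [seq pad_block p.1 p.2 | p <- zip w ms]) (Q, H) in
  (~~ has negl st'.1 -> act_word w (rev (proj Q)) = Some (rev (proj st'.1))).
Proof.
elim: w => [|a w IH] [|m ms] Q H //= Hs HS HT.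
case: Hs => Hs.
rewrite eval_cat.
have := block a m HS HT.
case: (eval (pad_block a m) (Q, H)) => S1 H1 /= [HS1 HT1 HB HC] Hn.
have IH' := IH ms S1 H1 Hs HS1 HT1.
rewrite HC.
  exact: IH'.
apply/negP => Hneg; move/negP: Hn; apply.
(* negatives persist *)
move: Hneg HS1 HT1; clear -Hs.
elim: w ms S1 H1 Hs => [|b w IHw] [|m' ms'] S1 H1 //= Hs' Hn HS1 HT1.
case: Hs' => Hs'.
rewrite eval_cat.
have := block b m' HS1 HT1.
case: (eval (pad_block b m') (S1, H1)) => S2 H2 /= [HS2 HT2 HB2 _].
by apply: IHw => //; apply: HB2.
Qed.

Lemma iii_i (w : gword X) :
  (exists p, permissible_padding w p /\ rep1_freegroup p) -> rep1_polycyclic w.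
Proof.
move=> [p [[ms [k [Hs ->]]] Hp]].
have := fg_eval Hp (st:=([::], 0%R)) isT.
rewrite /pad eval_cat.
have := @blocks w ms [::] 0 Hs I I.
case: (eval (flatten _) _) => S1 H1 /= HB.
rewrite eval_hneg => -[HS1 _]; subst S1.
move: HB => /(_ isT) /= H.
exact: rep1_of_nil.
Qed.

End Heights.

Theorem proposition4p10 (X : finType) (w : gword X) :
  (rep1_polycyclic w <->
     exists p, permissible_padding w p /\ rep1_polycyclic p) /\
  ((exists p, permissible_padding w p /\ rep1_polycyclic p) <->
     exists p, permissible_padding w p /\ rep1_freegroup p).
Proof.
split; split.
- exact: i_ii.
- move=> H; apply: iii_i; exact: ii_iii.
- exact: ii_iii.
- move=> H; apply: i_ii; exact: iii_i.
Qed.
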